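(* Let $m,n\ge 1$ and let $T$ be an invertible $mn\times mn$ Toeplitz-block Toeplitz matrix $T=\{\mathcal{T}_{i-k}\}_{i,k=1}^n$, $\mathcal{T}_r=\{t_r^{(j-\ell)}\}_{j,\ell=1}^m$. Define $$\omega(\lambda,\mu)=\mathbf{1}^*(A_1^*-\mu_1 I)^{-1}(A_2^*-\mu_2 I)^{-1}T^{-1}(A_2-\lambda_2 I)^{-1}(A_1-\lambda_1 I)^{-1}\mathbf{1},$$ $$u(\mu)=\mathbf{1}^*(A_1^*-\mu_1 I)^{-1}(A_2^*-\mu_2 I)^{-1}\Gamma-\mathrm{i}\begin{bmatrix}\mathbf{1}_m^*(\mathcal{A}_2^*-\mu_2 I_m)^{-1} & 0 & \mathbf{1}_n^*(\mathcal{A}_1^*-\mu_1 I_n)^{-1} & 0\end{bmatrix},$$ $$\widehat u(\lambda)=\widehat\Gamma(A_2-\lambda_2 I)^{-1}(A_1-\lambda_1 I)^{-1}\mathbf{1}+\mathrm{i}\begin{bmatrix}0\\ (\mathcal{A}_2-\lambda_2 I_m)^{-1}\mathbf{1}_m\\ 0\\ (\mathcal{A}_1-\lambda_1 I_n)^{-1}\mathbf{1}_n\end{bmatrix},$$ where in $u$ the blocks have lengths $m,m,n,n$ and in $\widehat u$ the blocks have heights $m,m,n,n$. Then for $p=1$ and $p=2$, $$\omega(\lambda,\mu)=\mathrm{i}(\lambda_p-\mu_p)^{-1}u(\mu)P_p\widehat u(\lambda).$$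
   Context: $\mathrm{i}$ is the imaginary unit, $I_r$ the $r\times r$ identity, $I=I_{mn}$, $\mathbf{1}_r$ the column of length $r$ with all entries $1$, $\mathbf{1}=\mathbf{1}_{mn}$; $^*$ is conjugate transpose. The entry $t_r^{(s)}$ of the block $\mathcal T_{i-k}$ at position $(j,\ell)$ sits in row $m(i-1)+j$, column $m(k-1)+\ell$ of $T$. For $N\ge1$ let $\mathcal{A}^{(N)}=\{a_{j-\ell}\}_{j,\ell=1}^N$ with $a_r=0$ for $r<0$, $a_0=\mathrm{i}/2$, $a_r=\mathrm{i}$ for $r>0$. Put $\mathcal A_1=\mathcal A^{(n)}$, $\mathcal A_2=\mathcal A^{(m)}$, $A_1=\{a_{i-k}I_m\}_{i,k=1}^n$ (i.e. $\mathcal A_1\otimes I_m$) and $A_2=\mathrm{diag}\{\mathcal A_2,\dots,\mathcal A_2\}$ ($n$ diagonal blocks). Define: $M_{11}=\mathrm{col}[\mathcal M_{11}^{(1)},\dots,\mathcal M_{11}^{(n)}]$ with $\mathcal M_{11}^{(i)}=\frac12\mathcal T_0+\sum_{s=1}^{i-1}\mathcal T_s$; $M_{21}=[I_m\ I_m\ \cdots\ I_m]$ ($m\times mn$); $M_{31}=M_{21}^*$; $M_{41}=[\mathcal M_{41}^{(1)}\ \cdots\ \mathcal M_{41}^{(n)}]$ with $\mathcal M_{41}^{(k)}=\frac12\mathcal T_0+\sum_{s=1}^{k-1}\mathcal T_{-s}$. For each $r$ let $\mathcal M_{12}^{(r)}$ be the $m\times1$ column whose $j$-th entry is $\frac12 t_r^{(0)}+\sum_{s=1}^{j-1}t_r^{(s)}$,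 and $\mathcal M_{42}^{(r)}$ the $1\times m$ row whose $\ell$-th entry is $\frac12 t_r^{(0)}+\sum_{s=1}^{\ell-1}t_r^{(-s)}$. Let $M_{12}=\{\mathcal M_{12}^{(i-k)}\}_{i,k=1}^n$ ($mn\times n$), $M_{22}=\mathrm{diag}\{\mathbf 1_m^*,\dots,\mathbf 1_m^*\}$ ($n\times mn$), $M_{32}=M_{22}^*$, $M_{42}=\{\mathcal M_{42}^{(i-k)}\}_{i,k=1}^n$ ($n\times mn$). Let $\Pi_p=[M_{1p}\ M_{3p}]$, $\widehat\Pi_p=\begin{bmatrix}M_{2p}\\ M_{4p}\end{bmatrix}$, $\Gamma_p=T^{-1}\Pi_p$, $\widehat\Gamma_p=\widehat\Pi_pT^{-1}$ ($p=1,2$), $\Gamma=[\Gamma_1\ \Gamma_2]$, $\widehat\Gamma=\begin{bmatrix}\widehat\Gamma_1\\ \widehat\Gamma_2\end{bmatrix}$. Finally $P_1=\mathrm{diag}\{I_{2m},0_{2n}\}$ and $P_2=I_{2(m+n)}-P_1$. *)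

(* Defs.v *)
From HB Require Import structures.
From mathcomp Require Import all_boot all_order all_algebra.
Set Implicit Arguments. Unset Strict Implicit. Unset Printing Implicit Defensive.
Import Order.TTheory GRing.Theory Num.Theory.
Local Open Scope ring_scope.

(* Conventions: all indices are 0-based.  An index a : 'I_(m*n) corresponds to
   the paper's row m(i-1)+j with i-1 = a %/ m, j-1 = a %% m.
   t r s stands for t_r^{(s)} (only |r| < n, |s| < m matter). *)

Section Defs.
Variable C : numClosedFieldType.

Definition ctr (p q : nat) (A : 'M[C]_(p, q)) : 'M[C]_(q, p) :=
  (map_mx Num.conj A)^T.

Definition ones (r : nat) : 'cV[C]_r := const_mx 1.

Definition tbt (m n : nat) (t : int -> int -> C) : 'M[C]_(m * n) :=
  \matrix_(a, b) t ((a %/ m)%N%:Z - (b %/ m)%N%:Z) ((a %% m)%N%:Z - (b %% m)%N%:Z).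

Definition aseq (r : int) : C :=
  if r < 0 then 0 else if r == 0 then 'i / 2%:R else 'i.

Definition calA (N : nat) : 'M[C]_N :=
  \matrix_(j, l) aseq (j%:Z - l%:Z).

(* A_1 = \mathcal A_1 \otimes I_m *)
Definition A1 (m n : nat) : 'M[C]_(m * n) :=
  \matrix_(a, b) (aseq ((a %/ m)%N%:Z - (b %/ m)%N%:Z) * (((a %% m)%N == (b %% m)%N)%:R)).

(* A_2 = diag(\mathcal A_2, ..., \mathcal A_2) *)
Definition A2 (m n : nat) : 'M[C]_(m * n) :=
  \matrix_(a, b) ((((a %/ m)%N == (b %/ m)%N)%:R) * aseq ((a %% m)%N%:Z - (b %% m)%N%:Z)).

Section Ms.
Variables (m n : nat) (t : int -> int -> C).

Definition M11 : 'M[C]_(m * n, m) :=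
  \matrix_(a, l) (t 0 ((a %% m)%N%:Z - l%:Z) / 2%:R
     + \sum_(1%N <= s < ((a %/ m)%N).+1) t s%:Z ((a %% m)%N%:Z - l%:Z)).
Definition M21 : 'M[C]_(m, m * n) := \matrix_(j, b) (((b %% m)%N == j)%:R).
Definition M31 : 'M[C]_(m * n, m) := ctr M21.
Definition M41 : 'M[C]_(m, m * n) :=
  \matrix_(j, b) (t 0 (j%:Z - (b %% m)%N%:Z) / 2%:R
     + \sum_(1%N <= s < ((b %/ m)%N).+1) t (- s%:Z) (j%:Z - (b %% m)%N%:Z)).

Definition M12 : 'M[C]_(m * n, n) :=
  \matrix_(a, k) (t ((a %/ m)%N%:Z - k%:Z) 0 / 2%:R
     + \sum_(1%N <= s < ((a %% m)%N).+1) t ((a %/ m)%N%:Z - k%:Z) s%:Z).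
Definition M22 : 'M[C]_(n, m * n) := \matrix_(i, b) (((b %/ m)%N == i)%:R).
Definition M32 : 'M[C]_(m * n, n) := ctr M22.
Definition M42 : 'M[C]_(n, m * n) :=
  \matrix_(i, b) (t (i%:Z - (b %/ m)%N%:Z) 0 / 2%:R
     + \sum_(1%N <= s < ((b %% m)%N).+1) t (i%:Z - (b %/ m)%N%:Z) (- s%:Z)).

Definition Tm := tbt m n t.
Definition Pi1 : 'M[C]_(m * n, m + m) := row_mx M11 M31.
Definition Pi2 : 'M[C]_(m * n, n + n) := row_mx M12 M32.
Definition Pih1 : 'M[C]_(m + m, m * n) := col_mx M21 M41.
Definition Pih2 : 'M[C]_(n + n, m * n) := col_mx M22 M42.
Definition Gamma1 := invmx Tm *m Pi1.
Definition Gamma2 := invmx Tm *m Pi2.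
Definition Gammah1 := Pih1 *m invmx Tm.
Definition Gammah2 := Pih2 *m invmx Tm.
Definition Gamma : 'M[C]_(m * n, (m + m) + (n + n)) := row_mx Gamma1 Gamma2.
Definition Gammah : 'M[C]_((m + m) + (n + n), m * n) := col_mx Gammah1 Gammah2.

Definition P1 : 'M[C]_((m + m) + (n + n)) := block_mx 1%:M 0 0 0.
Definition P2 : 'M[C]_((m + m) + (n + n)) := 1%:M - P1.

Definition Id := (1%:M : 'M[C]_(m * n)).

Definition omega (l1 l2 mu1 mu2 : C) : C :=
  (ctr (ones (m * n))
   *m invmx (ctr (A1 m n) - mu1 *: Id) *m invmx (ctr (A2 m n) - mu2 *: Id)
   *m invmx Tm *m invmx (A2 m n - l2 *: Id) *m invmx (A1 m n - l1 *: Id)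
   *m ones (m * n)) ord0 ord0.

Definition u (mu1 mu2 : C) : 'rV[C]_((m + m) + (n + n)) :=
  ctr (ones (m * n)) *m invmx (ctr (A1 m n) - mu1 *: Id)
    *m invmx (ctr (A2 m n) - mu2 *: Id) *m Gamma
  - 'i *: row_mx
      (row_mx (ctr (ones m) *m invmx (ctr (calA m) - mu2 *: 1%:M)) 0)
      (row_mx (ctr (ones n) *m invmx (ctr (calA n) - mu1 *: 1%:M)) 0).

Definition uh (l1 l2 : C) : 'cV[C]_((m + m) + (n + n)) :=
  Gammah *m invmx (A2 m n - l2 *: Id) *m invmx (A1 m n - l1 *: Id)
    *m ones (m * n)
  + 'i *: col_mx
      (col_mx 0 (invmx (calA m - l2 *: 1%:M) *m ones m))
      (col_mx 0 (invmx (calA n - l1 *: 1%:M) *m ones n)).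

End Ms.
End Defs.

(* Main.v *)
Require Import Defs.
From HB Require Import structures.
From mathcomp Require Import all_boot all_order all_algebra.
From mathcomp Require Import zify ring.
Import Order.TTheory GRing.Theory Num.Theory.
Local Open Scope ring_scope.

Lemma intertw {R : comUnitRingType} p q (P : 'M[R]_p) (Q : 'M[R]_q) (M : 'M[R]_(p, q)) :
  P \in unitmx -> Q \in unitmx -> P *m M = M *m Q -> invmx P *m M = M *m invmx Q.
Proof.
move=> uP uQ E.
by rewrite -[LHS]mulmx1 -(mulmxV uQ) !mulmxA -[invmx P *m M *m Q]mulmxA -E mulmxA mulVmx // mul1mx.
Qed.

Lemma keyres {F : fieldType} N (A As X Y : 'M[F]_N) (la mu : F) :
  (A - la *: 1%:M) \in unitmx -> (As - mu *: 1%:M) \in unitmx ->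
  X *m A - As *m X = Y ->
  (la - mu) *: (invmx (As - mu *: 1%:M) *m X *m invmx (A - la *: 1%:M))
  = X *m invmx (A - la *: 1%:M) - invmx (As - mu *: 1%:M) *m X
    + invmx (As - mu *: 1%:M) *m Y *m invmx (A - la *: 1%:M).
Proof.
move=> uA uS E.
have E1 : (As - mu *: 1%:M) *m X - X *m (A - la *: 1%:M) = (la - mu) *: X - Y.
  rewrite mulmxBl mulmxBr -E -?scalemxAl -?scalemxAr mul1mx mulmx1 scalerBl.
  rewrite !opprB addrACA [RHS]addrACA; congr (_ + _); exact: addrC.
have E2 : invmx (As - mu *: 1%:M) *m ((As - mu *: 1%:M) *m X - X *m (A - la *: 1%:M)) *m invmx (A - la *: 1%:M)
   = invmx (As - mu *: 1%:M) *m ((la - mu) *: X - Y) *m invmx (A - la *: 1%:M) by rewrite E1.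
rewrite mulmxBr mulmxBl mulKmx // -mulmxA mulmxK // in E2.
rewrite mulmxBr mulmxBl -scalemxAr -scalemxAl in E2.
by rewrite E2 subrK.
Qed.

Lemma lmid {F : comRingType} {V : lmodType F} (c : F) (t1 t2 t3 t4 : V) :
  c * c = -1 -> t1 - t2 + c *: (t3 + t4) = c *: (t3 - c *: t1 + (t4 + c *: t2)).
Proof.
move=> cc; rewrite !scalerDr scalerN !scalerA cc !scaleN1r opprK.
by rewrite addrACA [in RHS](addrC (c *: t3)) [in RHS](addrC (c *: t4)).
Qed.

Lemma gen (F : fieldType) N k (A As B Bs T : 'M[F]_N) (cB cBs : 'M[F]_k)
  (Ma Mb : 'M[F]_(N, k)) (Mc Md : 'M[F]_(k, N)) (o : 'cV[F]_N) (os : 'rV[F]_N)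
  (ok : 'cV[F]_k) (oks : 'rV[F]_k) (c la mu la' mu' : F) :
  T \in unitmx ->
  (A - la *: 1%:M) \in unitmx -> (As - mu *: 1%:M) \in unitmx ->
  (B - la' *: 1%:M) \in unitmx -> (Bs - mu' *: 1%:M) \in unitmx ->
  (cB - la' *: 1%:M) \in unitmx -> (cBs - mu' *: 1%:M) \in unitmx ->
  c * c = -1 ->
  A *m T - T *m As = c *: (Ma *m Mc + Mb *m Md) ->
  (B - la' *: 1%:M) *m Mb = Mb *m (cB - la' *: 1%:M) -> Mb *m ok = o ->
  Mc *m (Bs - mu' *: 1%:M) = (cBs - mu' *: 1%:M) *m Mc -> oks *m Mc = os ->
  (la - mu) *: (os *m invmx (Bs - mu' *: 1%:M) *m invmx (As - mu *: 1%:M) *m invmx T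
     *m invmx (A - la *: 1%:M) *m invmx (B - la' *: 1%:M) *m o)
  = c *: ((os *m invmx (Bs - mu' *: 1%:M) *m invmx (As - mu *: 1%:M) *m (invmx T *m row_mx Ma Mb)
           - c *: row_mx (oks *m invmx (cBs - mu' *: 1%:M)) 0)
          *m ((col_mx Mc Md *m invmx T) *m invmx (A - la *: 1%:M) *m invmx (B - la' *: 1%:M) *m o
           + c *: col_mx 0 (invmx (cB - la' *: 1%:M) *m ok))).
Proof.
move=> uT uA uAs uB uBs ucB ucBs cc H1 H2 H2o H3 H3o.
have HX : invmx T *m A - As *m invmx T
    = c *: (invmx T *m (Ma *m Mc + Mb *m Md) *m invmx T).
  rewrite scalemxAl scalemxAr -H1 mulmxBr mulmxBl !mulmxA mulVmx // mul1mx.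
  by rewrite -!mulmxA mulmxV // mulmx1.
have key := @keyres F N A As (invmx T) _ la mu uA uAs HX.
have H2' := @intertw F _ _ _ _ Mb uB ucB H2.
have H3' := @intertw F _ _ _ _ Mc ucBs uBs (esym H3).
have L : (la - mu) *: (os *m invmx (Bs - mu' *: 1%:M) *m invmx (As - mu *: 1%:M) *m invmx T
     *m invmx (A - la *: 1%:M) *m invmx (B - la' *: 1%:M) *m o)
   = os *m invmx (Bs - mu' *: 1%:M) *m ((la - mu) *: (invmx (As - mu *: 1%:M) *m invmx T
     *m invmx (A - la *: 1%:M))) *m invmx (B - la' *: 1%:M) *m o.
  by rewrite -scalemxAr -!scalemxAl !mulmxA.
rewrite L key; clear L key.
rewrite scale_row_mx scaler0 opp_row_mx oppr0 !mul_mx_row add_row_mx.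
rewrite scale_col_mx scaler0 !mul_col_mx add_col_mx addr0 mul_row_col !mulmxA.
have F3 : oks *m invmx (cBs - mu' *: 1%:M) *m Mc = os *m invmx (Bs - mu' *: 1%:M).
  by rewrite -mulmxA H3' mulmxA H3o.
have F2 : forall P : 'M_(1, N), P *m Mb *m invmx (cB - la' *: 1%:M) *m ok
    = P *m invmx (B - la' *: 1%:M) *m o.
  by move=> P; rewrite -H2o !mulmxA -(mulmxA P (invmx (B - la' *: 1%:M)) Mb) H2' mulmxA.
rewrite addr0 !(mulmxDr, mulmxBr, mulmxDl, mulmxBl) -?scalemxAl -?scalemxAr !mulmxA.
do 3 rewrite ?(mulmxDr, mulmxDl, mulNmx, mulmxN) -?scalemxAl -?scalemxAr ?mulmxA.
rewrite F3 F2.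
exact: lmid.
Qed.

Section Idx.
Variables m n : nat.

Lemma idx_lt (i : 'I_n) (j : 'I_m) : (i * m + j < m * n)%N.
Proof. have := ltn_ord i; have := ltn_ord j; nia. Qed.

Definition idx (i : 'I_n) (j : 'I_m) : 'I_(m * n) := Ordinal (idx_lt i j).

Lemma idx_div i j : ((idx i j : nat) %/ m)%N = i.
Proof.
have hm : (0 < m)%N by case: j => /= j; case: m => //.
by rewrite /= divnMDl // divn_small // addn0.
Qed.

Lemma idx_mod i j : ((idx i j : nat) %% m)%N = j.
Proof. by rewrite /= modnMDl modn_small. Qed.

Lemma divo_lt (a : 'I_(m * n)) : ((a : nat) %/ m < n)%N.
Proof.
have hm : (0 < m)%N by case: a => /= a; case: m => //.
rewrite ltn_divLR //; have := ltn_ord a; lia.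
Qed.

Lemma modo_lt (a : 'I_(m * n)) : ((a : nat) %% m < m)%N.
Proof.
have hm : (0 < m)%N by case: a => /= a; case: m => //.
by rewrite ltn_pmod.
Qed.

Definition divo (a : 'I_(m * n)) : 'I_n := Ordinal (divo_lt a).
Definition modo (a : 'I_(m * n)) : 'I_m := Ordinal (modo_lt a).

Lemma idx_divmod a : idx (divo a) (modo a) = a.
Proof. by apply: val_inj; rewrite /= -divn_eq. Qed.

Lemma idx_case (P : 'I_(m * n) -> Prop) : (forall i j, P (idx i j)) -> forall a, P a.
Proof. by move=> H a; rewrite -(idx_divmod a). Qed.

Lemma sum_split {R : nmodType} (F : 'I_(m * n) -> R) :
  \sum_(c < m * n) F c = \sum_(i < n) \sum_(j < m) F (idx i j).
Proof.
rewrite pair_big /=.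
rewrite (reindex (fun p : 'I_n * 'I_m => idx p.1 p.2)) //=.
exists (fun c => (divo c, modo c)) => [[i j] _ | c _] /=.
  by congr pair; apply: val_inj; rewrite /= ?idx_div ?idx_mod.
exact: idx_divmod.
Qed.

End Idx.

Lemma sum_delta {R : pzSemiRingType} N (F : 'I_N -> R) (j0 : 'I_N) :
  \sum_(j < N) (((j0 : nat) == j)%:R * F j) = F j0.
Proof.
rewrite (bigD1 j0) //= eqxx mul1r big1 ?addr0 // => j nj.
by rewrite (_ : ((j0 : nat) == j) = false) ?mul0r //; rewrite eq_sym; exact: negbTE nj.
Qed.

Lemma sum_delta' {R : pzSemiRingType} N (F : 'I_N -> R) (j0 : 'I_N) :
  \sum_(j < N) (F j * ((j : nat) == j0)%:R) = F j0.
Proof.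
rewrite (bigD1 j0) //= eqxx mulr1 big1 ?addr0 // => j nj.
by rewrite (_ : ((j : nat) == j0) = false) ?mulr0 //; exact: negbTE nj.
Qed.

Lemma sum_only {R : nmodType} N (G : 'I_N -> R) (j0 : 'I_N) :
  (forall j, j != j0 -> G j = 0) -> \sum_j G j = G j0.
Proof. by move=> H; rewrite (bigD1 j0) //= big1 ?addr0. Qed.

Lemma neq_nat N (j j0 : 'I_N) : j != j0 -> ((j0 : nat) == j) = false.
Proof. by move=> h; apply/negbTE; rewrite eq_sym. Qed.

Lemma sd_mid {R : pzSemiRingType} N (a : R) (F : 'I_N -> R) (j0 : 'I_N) :
  \sum_(j < N) a * ((j0 : nat) == j)%:R * F j = a * F j0.
Proof.
rewrite (@sum_only _ _ _ j0) ?eqxx ?mulr1 // => j /neq_nat ->.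
by rewrite mulr0 mul0r.
Qed.

Lemma sd_r {R : pzSemiRingType} N (F : 'I_N -> R) (j0 : 'I_N) :
  \sum_(j < N) F j * ((j0 : nat) == j)%:R = F j0.
Proof.
rewrite (@sum_only _ _ _ j0) ?eqxx ?mulr1 // => j /neq_nat ->.
by rewrite mulr0.
Qed.

Lemma sd_l {R : pzSemiRingType} N (F : 'I_N -> R) (j0 : 'I_N) :
  \sum_(j < N) ((j0 : nat) == j)%:R * F j = F j0.
Proof.
rewrite (@sum_only _ _ _ j0) ?eqxx ?mul1r // => j /neq_nat ->.
by rewrite mul0r.
Qed.

Lemma sd_r' {R : pzSemiRingType} N (F : 'I_N -> R) (j0 : 'I_N) :
  \sum_(j < N) F j * ((j : nat) == j0)%:R = F j0.
Proof. by under eq_bigr => j _ do rewrite eq_sym; rewrite sd_r. Qed.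

Lemma sd_l' {R : pzSemiRingType} N (F : 'I_N -> R) (j0 : 'I_N) :
  \sum_(j < N) ((j : nat) == j0)%:R * F j = F j0.
Proof. by under eq_bigr => j _ do rewrite eq_sym; rewrite sd_l. Qed.

Section Scal.
Variable C : numClosedFieldType.

Lemma aseq_pos (r : int) : 0 < r -> aseq C r = 'i.
Proof. by move=> h; rewrite /aseq ltNge ltW //= gt_eqF. Qed.
Lemma aseq_neg (r : int) : r < 0 -> aseq C r = 0.
Proof. by move=> h; rewrite /aseq h. Qed.
Lemma aseq_zero : aseq C 0 = 'i / 2%:R.
Proof. by rewrite /aseq. Qed.

Lemma aseq_conj r : (aseq C r)^* = - aseq C r.
Proof.
rewrite /aseq; case: ifP => _; first by rewrite rmorph0 oppr0.
case: ifP => _; last by rewrite conjCi.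
have -> : ('i / 2%:R : C)^* = 'i^* / (2%:R)^* by exact: fmorph_div.
by rewrite conjCi conjC_nat mulNr.
Qed.

Lemma asum N (i : 'I_N) (G : nat -> C) :
  \sum_(x < N) aseq C (i%:Z - (x : nat)%:Z) * G x
  = 'i / 2%:R * G i + 'i * \sum_(0 <= x < i) G x.
Proof.
rewrite -(big_mkord xpredT (fun x : nat => aseq C (i%:Z - x%:Z) * G x)).
rewrite (@big_cat_nat _ _ _ i) //=; last exact: ltnW.
rewrite (@big_ltn _ _ _ i N) //= subrr aseq_zero.
rewrite [X in _ + (_ + X)]big_nat_cond [X in _ + (_ + X)]big1 ?addr0; last first.
  move=> x /andP[/andP[hx _] _]; rewrite aseq_neg ?mul0r //; lia.
rewrite addrC mulr_sumr; congr (_ + _).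
rewrite big_nat_cond [RHS]big_nat_cond; apply: eq_bigr => x /andP[/andP[_ hx] _].
by rewrite aseq_pos //; lia.
Qed.


Lemma tele (tau : int -> C) (i k : nat) :
  \sum_(0 <= x < i.+1) tau (x%:Z - k%:Z) + \sum_(0 <= x < k) tau (i%:Z - x%:Z)
  = tau 0 + \sum_(1 <= s < i.+1) tau s%:Z + \sum_(1 <= s < k.+1) tau (- s%:Z).
Proof.
elim: k => [|k IH].
  rewrite [X in _ + X = _]big_geq // [X in _ = _ + X]big_geq // !addr0 big_ltn //; congr (tau _ + _).
  by apply: eq_bigr => x _; rewrite subr0.
rewrite [\sum_(0 <= x < k.+1) _]big_nat_recr // [\sum_(1 <= s < k.+2) _]big_nat_recr //= [in RHS]addrA -IH.
have Ht : \sum_(0 <= x < i.+1) tau (x%:Z - k%:Z) - \sum_(0 <= x < i.+1) tau (x%:Z - k.+1%:Z)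
    = tau (i%:Z - k%:Z) - tau (- k.+1%:Z).
  rewrite -sumrB (@telescope_sumr_eq _ 0 i.+1 (fun x : nat => tau (x%:Z - k.+1%:Z))) //=.
    by congr (tau _ - tau _); lia.
  by move=> x _; congr (tau _ - _); lia.
have -> : \sum_(0 <= x < i.+1) tau (x%:Z - k%:Z) =
   \sum_(0 <= x < i.+1) tau (x%:Z - k.+1%:Z) + (tau (i%:Z - k%:Z) - tau (- k.+1%:Z)).
  by rewrite -Ht addrC subrK.
ring.
Qed.


Lemma disp_scalar N (i k : 'I_N) (tau : int -> C) :
  \sum_(x < N) aseq C (i%:Z - (x : nat)%:Z) * tau ((x : nat)%:Z - k%:Z)
  - \sum_(x < N) tau (i%:Z - (x : nat)%:Z) * (aseq C (k%:Z - (x : nat)%:Z))^*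
  = 'i * (tau 0 / 2%:R + \sum_(1 <= s < i.+1) tau s%:Z
          + (tau 0 / 2%:R + \sum_(1 <= s < k.+1) tau (- s%:Z))).
Proof.
rewrite (@asum _ i (fun x : nat => tau (x%:Z - k%:Z))).
under [X in _ - X = _]eq_bigr => x _ do rewrite aseq_conj mulrN mulrC.
rewrite sumrN (@asum _ k (fun x : nat => tau (i%:Z - x%:Z))).
have T := tele tau i k.
rewrite big_nat_recr //= in T.
have E : \sum_(1 <= s < i.+1) tau s%:Z
   = \sum_(0 <= i0 < i) tau (i0%:Z - k%:Z) + tau (i%:Z - k%:Z)
     + \sum_(0 <= x < k) tau (i%:Z - x%:Z) - tau 0 - \sum_(1 <= s < k.+1) tau (- s%:Z).
  by rewrite T; ring.
rewrite E; field.
by [].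

Qed.

End Scal.

Section Ent.
Variable C : numClosedFieldType.
Variables (m n : nat) (t : int -> int -> C).

Lemma conjM' (x y : C) : (x * y)^* = x^* * y^*.
Proof. exact: rmorphM. Qed.

Lemma disp1 : A1 C m n *m Tm m n t - Tm m n t *m ctr (A1 C m n)
  = 'i *: (M11 m n t *m M21 C m n + M31 C m n *m M41 m n t).
Proof.
apply/matrixP => a b; move: a b; apply: idx_case => i j; apply: idx_case => k l.
rewrite /Tm /tbt /ctr /M11 /M21 /M31 /M41 /A1 !mxE !sum_split.
under eq_bigr => ? _ do under eq_bigr => ? _ do rewrite !mxE !idx_div !idx_mod.
under [X in _ - X]eq_bigr => ? _ do under eq_bigr => ? _ do rewrite !mxE !idx_div !idx_mod.
under eq_bigr => ? _ do rewrite sd_mid.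
under [X in _ - X]eq_bigr => ? _ do under eq_bigr => ? _ do rewrite conjM' conjC_nat mulrA.
under [X in _ - X]eq_bigr => ? _ do rewrite sd_r.
rewrite /ctr.
under [X in _ = _ * (X + _)]eq_bigr => ? _ do rewrite !mxE !idx_mod.
under [X in _ = _ * (_ + X)]eq_bigr => ? _ do rewrite !mxE !idx_mod conjC_nat.
rewrite sd_r sd_l !idx_div.
rewrite (@disp_scalar C n i k (fun r => t r (j%:Z - l%:Z))).
by [].
Qed.

Lemma disp2 : A2 C m n *m Tm m n t - Tm m n t *m ctr (A2 C m n)
  = 'i *: (M12 m n t *m M22 C m n + M32 C m n *m M42 m n t).
Proof.
apply/matrixP => a b; move: a b; apply: idx_case => i j; apply: idx_case => k l.
rewrite /Tm /tbt /ctr /M12 /M22 /M32 /M42 /A2 !mxE !sum_split.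
under eq_bigr => ? _ do under eq_bigr => ? _ do rewrite !mxE !idx_div !idx_mod -mulrA.
under [X in _ - X]eq_bigr => ? _ do under eq_bigr => ? _ do rewrite !mxE !idx_div !idx_mod conjM' conjC_nat mulrCA.
under eq_bigr => ? _ do rewrite -mulr_sumr.
under [X in _ - X]eq_bigr => ? _ do rewrite -mulr_sumr.
rewrite !sd_l /ctr.
under [X in _ = _ * (X + _)]eq_bigr => ? _ do rewrite !mxE !idx_div.
under [X in _ = _ * (_ + X)]eq_bigr => ? _ do rewrite !mxE !idx_div conjC_nat.
rewrite sd_r sd_l !idx_mod.
rewrite (@disp_scalar C m j l (fun r => t (i%:Z - k%:Z) r)).
by [].
Qed.


Lemma inter1 : A2 C m n *m M31 C m n = M31 C m n *m calA C m.
Proof.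
apply/matrixP => a q; move: a; apply: idx_case => i j.
rewrite /M31 /ctr /M21 /A2 /calA !mxE sum_split.
under eq_bigr => ? _ do under eq_bigr => ? _ do rewrite !mxE !idx_div !idx_mod conjC_nat -mulrA.
under eq_bigr => ? _ do rewrite -mulr_sumr.
rewrite sd_l sd_r'.
under eq_bigr => ? _ do rewrite !mxE idx_mod conjC_nat.
by rewrite sd_l.
Qed.


Lemma inter1o : M31 C m n *m ones C m = ones C (m * n).
Proof.
apply/matrixP => a q; move: a; apply: idx_case => i j.
rewrite /M31 /ctr /M21 /ones !mxE.
under eq_bigr => ? _ do rewrite !mxE idx_mod conjC_nat.
by rewrite sd_l.
Qed.

Lemma inter1s : M21 C m n *m ctr (A2 C m n) = ctr (calA C m) *m M21 C m n.
Proof.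
apply/matrixP => q b; move: b; apply: idx_case => k l.
rewrite /ctr /M21 /A2 /calA !mxE sum_split.
under eq_bigr => ? _ do under eq_bigr => ? _ do rewrite !mxE !idx_div !idx_mod conjM' conjC_nat mulrCA.
under eq_bigr => ? _ do rewrite -mulr_sumr.
rewrite sd_l sd_l'.
under eq_bigr => ? _ do rewrite !mxE idx_mod.
by rewrite sd_r.
Qed.

Lemma inter1so : ctr (ones C m) *m M21 C m n = ctr (ones C (m * n)).
Proof.
apply/matrixP => q b; move: b; apply: idx_case => k l.
rewrite /ctr /M21 /ones !mxE.
under eq_bigr => ? _ do rewrite !mxE idx_mod.
by rewrite sd_r.
Qed.

Lemma inter2 : A1 C m n *m M32 C m n = M32 C m n *m calA C n.
Proof.
apply/matrixP => a q; move: a; apply: idx_case => i j.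
rewrite /M32 /ctr /M22 /A1 /calA !mxE sum_split.
under eq_bigr => ? _ do under eq_bigr => ? _ do rewrite !mxE !idx_div !idx_mod conjC_nat mulrAC.
under eq_bigr => ? _ do rewrite sd_r.
rewrite sd_r'.
under eq_bigr => ? _ do rewrite !mxE idx_div conjC_nat.
by rewrite sd_l.
Qed.

Lemma inter2o : M32 C m n *m ones C n = ones C (m * n).
Proof.
apply/matrixP => a q; move: a; apply: idx_case => i j.
rewrite /M32 /ctr /M22 /ones !mxE.
under eq_bigr => ? _ do rewrite !mxE idx_div conjC_nat.
by rewrite sd_l.
Qed.

Lemma inter2s : M22 C m n *m ctr (A1 C m n) = ctr (calA C n) *m M22 C m n.
Proof.
apply/matrixP => q b; move: b; apply: idx_case => k l.
rewrite /ctr /M22 /A1 /calA !mxE sum_split.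
under eq_bigr => ? _ do under eq_bigr => ? _ do rewrite !mxE !idx_div !idx_mod conjM' conjC_nat mulrA.
under eq_bigr => ? _ do rewrite sd_r.
rewrite sd_l'.
under eq_bigr => ? _ do rewrite !mxE idx_div.
by rewrite sd_r.
Qed.

Lemma inter2so : ctr (ones C n) *m M22 C m n = ctr (ones C (m * n)).
Proof.
apply/matrixP => q b; move: b; apply: idx_case => k l.
rewrite /ctr /M22 /ones !mxE.
under eq_bigr => ? _ do rewrite !mxE idx_div.
by rewrite sd_r.
Qed.

Lemma A12comm : A1 C m n *m A2 C m n = A2 C m n *m A1 C m n.
Proof.
apply/matrixP => a b; move: a b; apply: idx_case => i j; apply: idx_case => k l.
rewrite /A1 /A2 !mxE !sum_split.
under eq_bigr => ? _ do under eq_bigr => ? _ do rewrite !mxE !idx_div !idx_mod mulrACA.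
under [RHS]eq_bigr => ? _ do under eq_bigr => ? _ do rewrite !mxE !idx_div !idx_mod mulrACA.
under eq_bigr => ? _ do rewrite -mulr_sumr sd_l mulrAC.
under [RHS]eq_bigr => ? _ do rewrite -mulr_sumr sd_r' -mulrA.
by rewrite sd_r' sd_l.
Qed.

End Ent.

Section Units.
Variable C : numClosedFieldType.

Lemma ctrM p q r (A : 'M[C]_(p, q)) (B : 'M[C]_(q, r)) : ctr (A *m B) = ctr B *m ctr A.
Proof. by rewrite /ctr map_mxM trmx_mul. Qed.

Lemma unit_of_trig N (M : 'M[C]_N) :
  (forall i j : 'I_N, (i < j)%N -> M i j = 0) -> (forall i, M i i != 0) -> M \in unitmx.
Proof.
move=> H D; rewrite unitmxE unitfE det_trig; last by apply/is_trig_mxP.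
by apply/prodf_neq0 => i _.
Qed.

Lemma trig_unit N (L : 'M[C]_N) (d x : C) :
  (forall i j : 'I_N, (i < j)%N -> L i j = 0) -> (forall i, L i i = d) -> d != x ->
  (L - x *: 1%:M) \in unitmx.
Proof.
move=> H D dx; apply: unit_of_trig => [i j lt|i]; rewrite !mxE.
  rewrite H //; case: eqP => [e|_]; last by rewrite mulr0 subr0.
  by rewrite e ltnn in lt.
by rewrite D eqxx mulr1 subr_eq0.
Qed.

Lemma trig_unit_ctr N (L : 'M[C]_N) (d x : C) :
  (forall i j : 'I_N, (i < j)%N -> L i j = 0) -> (forall i, L i i = d) -> d^* != x ->
  (ctr L - x *: 1%:M) \in unitmx.
Proof.
move=> H D dx; rewrite -unitmx_tr; apply: unit_of_trig => [i j lt|i]; rewrite /ctr !mxE.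
  rewrite H // conjC0; case: eqP => [e|_]; last by rewrite mulr0 subr0.
  by rewrite e ltnn in lt.
by rewrite D eqxx mulr1 subr_eq0.
Qed.

Variables m n : nat.

Lemma A1_trig (a b : 'I_(m * n)) : (a < b)%N -> A1 C m n a b = 0.
Proof.
move: a b; apply: idx_case => i j; apply: idx_case => k l /= lt.
rewrite /A1 mxE !idx_div !idx_mod.
have := ltn_ord l; have := ltn_ord j => hj hl.
case: (ltngtP i k) => [ik|ki|ik].
- by rewrite aseq_neg ?mul0r //; lia.
- exfalso; nia.
- rewrite (_ : ((j : nat) == l) = false) ?mulr0 //; apply: negbTE; apply/eqP.
  rewrite ik in lt; lia.
Qed.

Lemma A1_diag (a : 'I_(m * n)) : A1 C m n a a = 'i / 2%:R.
Proof. by rewrite /A1 mxE subrr eqxx mulr1 aseq_zero. Qed.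

Lemma A2_trig (a b : 'I_(m * n)) : (a < b)%N -> A2 C m n a b = 0.
Proof.
move: a b; apply: idx_case => i j; apply: idx_case => k l /= lt.
rewrite /A2 mxE !idx_div !idx_mod.
have := ltn_ord l; have := ltn_ord j => hj hl.
case: (ltngtP i k) => [ik|ki|ik].
- by rewrite mul0r.
- exfalso; nia.
- by rewrite aseq_neg ?mulr0 //; rewrite ik in lt; lia.
Qed.

Lemma A2_diag (a : 'I_(m * n)) : A2 C m n a a = 'i / 2%:R.
Proof. by rewrite /A2 mxE subrr eqxx mul1r aseq_zero. Qed.

Lemma calA_trig N (a b : 'I_N) : (a < b)%N -> calA C N a b = 0.
Proof. by move=> lt; rewrite /calA mxE aseq_neg //; lia. Qed.

Lemma calA_diag N (a : 'I_N) : calA C N a a = 'i / 2%:R.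
Proof. by rewrite /calA mxE subrr aseq_zero. Qed.

Lemma conj_ihalf : ('i / 2%:R : C)^* = - ('i / 2%:R).
Proof.
have -> : ('i / 2%:R : C)^* = 'i^* / (2%:R)^* by exact: fmorph_div.
by rewrite conjCi conjC_nat mulNr.
Qed.

End Units.

Lemma shiftL {R : comUnitRingType} p q (B : 'M[R]_p) (cB : 'M[R]_q) (M : 'M[R]_(p, q)) l :
  B *m M = M *m cB -> (B - l *: 1%:M) *m M = M *m (cB - l *: 1%:M).
Proof.
by move=> H; rewrite mulmxBl mulmxBr H -scalemxAl -scalemxAr mul1mx mulmx1.
Qed.

Lemma comm_shift {R : comUnitRingType} N (P Q : 'M[R]_N) a b :
  P *m Q = Q *m P -> (P - a *: 1%:M) *m (Q - b *: 1%:M) = (Q - b *: 1%:M) *m (P - a *: 1%:M).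
Proof.
move=> H; rewrite !mulmxBl !mulmxBr H -!scalemxAl -!scalemxAr !mul1mx !mulmx1 !scalerA mulrC.
rewrite !opprB !addrA addrAC [RHS]addrAC; congr (_ + _); exact: addrAC.
Qed.

Lemma comm_inv {R : comUnitRingType} N (P Q : 'M[R]_N) :
  P \in unitmx -> Q \in unitmx -> P *m Q = Q *m P -> invmx P *m invmx Q = invmx Q *m invmx P.
Proof.
move=> uP uQ H.
have h1 := @intertw _ _ _ P P Q uP uP H.
have h2 := @intertw _ _ _ Q Q (invmx P) uQ uQ (esym h1).
by rewrite h2.
Qed.

Lemma fin {F : fieldType} (x y w c : F) : w != 0 -> w * x = c * y -> x = c * w^-1 * y.
Proof. by move=> hw E; apply: (mulfI hw); rewrite E; field. Qed.

Lemma finM {F : numClosedFieldType} (M N : 'M[F]_(1, 1)) (w c : F) :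
  w != 0 -> w *: M = c *: N -> M ord0 ord0 = c * w^-1 * N ord0 ord0.
Proof.
move=> hw /matrixP/(_ ord0 ord0); rewrite !mxE => E.
exact: (@fin _ _ _ _ _ hw E).
Qed.

Theorem proposition2p1 (C : numClosedFieldType) (m n : nat)
  (t : int -> int -> C) (l1 l2 mu1 mu2 : C) :
  (0 < m)%N -> (0 < n)%N ->
  @tbt C m n t \in unitmx ->
  l1 != 'i / 2%:R -> l2 != 'i / 2%:R ->
  mu1 != - ('i / 2%:R) -> mu2 != - ('i / 2%:R) ->
  (l1 != mu1 ->
     @omega C m n t l1 l2 mu1 mu2
     = 'i * (l1 - mu1)^-1 * (@u C m n t mu1 mu2 *m @P1 C m n *m @uh C m n t l1 l2) ord0 ord0) /\
  (l2 != mu2 ->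
     @omega C m n t l1 l2 mu1 mu2
     = 'i * (l2 - mu2)^-1 * (@u C m n t mu1 mu2 *m @P2 C m n *m @uh C m n t l1 l2) ord0 ord0).
Proof.
move=> hm hn uT hl1 hl2 hmu1 hmu2.
have ne1 : 'i / 2%:R != l1 by rewrite eq_sym.
have ne2 : 'i / 2%:R != l2 by rewrite eq_sym.
have nes1 : ('i / 2%:R)^* != mu1 by rewrite conj_ihalf eq_sym.
have nes2 : ('i / 2%:R)^* != mu2 by rewrite conj_ihalf eq_sym.
have uA1 := @trig_unit C _ _ _ _ (@A1_trig C m n) (@A1_diag C m n) ne1.
have uA2 := @trig_unit C _ _ _ _ (@A2_trig C m n) (@A2_diag C m n) ne2.
have uA1s := @trig_unit_ctr C _ _ _ _ (@A1_trig C m n) (@A1_diag C m n) nes1.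
have uA2s := @trig_unit_ctr C _ _ _ _ (@A2_trig C m n) (@A2_diag C m n) nes2.
have ucm := @trig_unit C _ _ _ _ (@calA_trig C m) (@calA_diag C m) ne2.
have ucn := @trig_unit C _ _ _ _ (@calA_trig C n) (@calA_diag C n) ne1.
have ucms := @trig_unit_ctr C _ _ _ _ (@calA_trig C m) (@calA_diag C m) nes2.
have ucns := @trig_unit_ctr C _ _ _ _ (@calA_trig C n) (@calA_diag C n) nes1.
have cc : ('i : C) * 'i = -1 by rewrite -expr2 sqrCi.
rewrite /omega /u /uh /Gamma /Gammah /Gamma1 /Gamma2 /Gammah1 /Gammah2 /Id.
rewrite mul_mx_row scale_row_mx opp_row_mx add_row_mx.
rewrite !mul_col_mx scale_col_mx add_col_mx.
split => hne.
- rewrite /P1 mul_row_block !mulmx0 !mulmx1 !addr0 mul_row_col mul0mx addr0.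
  have cA : ctr (A1 C m n) *m ctr (A2 C m n) = ctr (A2 C m n) *m ctr (A1 C m n).
    by rewrite -!ctrM (@A12comm C m n).
  have hcs := @comm_inv _ _ _ _ uA1s uA2s (@comm_shift _ _ _ _ mu1 mu2 cA).
  have hc := @comm_inv _ _ _ _ uA2 uA1 (@comm_shift _ _ _ _ l2 l1 (esym (@A12comm C m n))).
  have cRs : forall p (Z : 'M[C]_(p, m * n)),
      Z *m invmx (ctr (A1 C m n) - mu1 *: 1%:M) *m invmx (ctr (A2 C m n) - mu2 *: 1%:M)
      = Z *m invmx (ctr (A2 C m n) - mu2 *: 1%:M) *m invmx (ctr (A1 C m n) - mu1 *: 1%:M).
    by move=> p Z; rewrite -!mulmxA hcs.
  have cR : forall p (Z : 'M[C]_(p, m * n)),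
      Z *m invmx (A2 C m n - l2 *: 1%:M) *m invmx (A1 C m n - l1 *: 1%:M)
      = Z *m invmx (A1 C m n - l1 *: 1%:M) *m invmx (A2 C m n - l2 *: 1%:M).
    by move=> p Z; rewrite -!mulmxA hc.
  rewrite !cRs !cR.
  have hw : l1 - mu1 != 0 by rewrite subr_eq0.
  have G := @gen C (m * n) m (A1 C m n) (ctr (A1 C m n)) (A2 C m n) (ctr (A2 C m n)) (Tm m n t)
    (calA C m) (ctr (calA C m)) (M11 m n t) (M31 C m n) (M21 C m n) (M41 m n t)
    (ones C (m * n)) (ctr (ones C (m * n))) (ones C m) (ctr (ones C m)) 'i l1 mu1 l2 mu2
    uT uA1 uA1s uA2 uA2s ucm ucms cc (@disp1 C m n t) (@shiftL _ _ _ _ _ _ l2 (@inter1 C m n))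
    (@inter1o C m n) (esym (@shiftL _ _ _ _ _ _ mu2 (esym (@inter1s C m n)))) (@inter1so C m n).
  rewrite !mul_col_mx in G.
  apply: (@finM C _ _ (l1 - mu1) (Num.imaginary) hw).
  exact: G.
- rewrite /P2 /P1 (scalar_mx_block (m + m) (n + n)) opp_block_mx add_block_mx.
  rewrite subrr !oppr0 !addr0 mul_row_block !mulmx0 !mulmx1 !addr0 !add0r mul_row_col mul0mx add0r.
  have hw : l2 - mu2 != 0 by rewrite subr_eq0.
  have G := @gen C (m * n) n (A2 C m n) (ctr (A2 C m n)) (A1 C m n) (ctr (A1 C m n)) (Tm m n t)
    (calA C n) (ctr (calA C n)) (M12 m n t) (M32 C m n) (M22 C m n) (M42 m n t)
    (ones C (m * n)) (ctr (ones C (m * n))) (ones C n) (ctr (ones C n)) 'i l2 mu2 l1 mu1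
    uT uA2 uA2s uA1 uA1s ucn ucns cc (@disp2 C m n t) (@shiftL _ _ _ _ _ _ l1 (@inter2 C m n))
    (@inter2o C m n) (esym (@shiftL _ _ _ _ _ _ mu1 (esym (@inter2s C m n)))) (@inter2so C m n).
  rewrite !mul_col_mx in G.
  apply: (@finM C _ _ (l2 - mu2) (Num.imaginary) hw).
  exact: G.
Qed.
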